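(* Consider equation (E) and assume each $\tau_i$ is non-decreasing. Let $p:[t_0,\infty)\to[0,\infty)$ be continuous with $p_i(t)\ge p(t)$ for all $t\ge t_0$ and $i=1,\dots,m$. If $$\limsup_{t\to+\infty}\prod_{j=1}^{m}\int_{\tau_j(t)}^{t}p(s)\,ds>\frac{1}{m^{m}},$$ then all solutions of (E) oscillate.
   Context: Equation (E) is $x'(t)+\sum_{i=1}^{m}p_i(t)\,x(\tau_i(t))=0$, $t\ge t_0$, where $m\ge1$ is an integer and, for each $i$, $p_i,\tau_i:[t_0,\infty)\to[0,\infty)$ are continuous, $\tau_i(t)\le t$ for $t\ge t_0$, and $\lim_{t\to\infty}\tau_i(t)=\infty$. Let $\tau(t)=\min_i\tau_i(t)$ and $\tau_{(-1)}(t)=\sup\{s:\tau(s)\le t\}$. A solution of (E) is a function $x\in C([T_0,\infty);\mathbb{R})$ for some $T_0\ge t_0$ which is continuously differentiable on $[\tau_{(-1)}(T_0),\infty)$ and satisfies (E) for $t\ge\tau_{(-1)}(T_0)$. A solution is oscillatory if it has arbitrarily large zeros; ''all solutions oscillate'' means every solution is oscillatory. *)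

(* Defs.v *)
From Stdlib Require Import Reals Lra.
Open Scope R_scope.

Fixpoint sumR (n : nat) (f : nat -> R) : R :=
  match n with O => 0 | S k => sumR k f + f k end.

Fixpoint prodR (n : nat) (f : nat -> R) : R :=
  match n with O => 1 | S k => prodR k f * f k end.

Fixpoint minR (n : nat) (f : nat -> R) : R :=
  match n with O => f O | S k => Rmin (minR k f) (f (S k)) end.

(* tau(t) = min_{1<=i<=m} tau_i(t), with indices shifted to 0..m-1 *)
Definition tau_min (m : nat) (tau : nat -> R -> R) (t : R) : R :=
  minR (pred m) (fun i => tau i t).

Definition has_integral (f : R -> R) (a b I : R) : Prop :=
  exists pr : Riemann_integrable f a b, RiemannInt pr = I.

Definition cont_from (f : R -> R) (a : R) : Prop :=
  forall t, a <= t -> continue_in f (fun s => a <= s) t.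

(* x is a solution of (E) with initial point T0:
   continuous on [T0,oo), and with T1 = tau_{(-1)}(T0) = sup{s >= t0 : tau(s) <= T0},
   x satisfies x'(t) = - sum_i p_i(t) x(tau_i(t)) for t > T1. *)
Definition is_solution (t0 : R) (m : nat) (p tau : nat -> R -> R)
    (x : R -> R) (T0 : R) : Prop :=
  t0 <= T0 /\ cont_from x T0 /\
  exists T1, is_lub (fun s => t0 <= s /\ tau_min m tau s <= T0) T1 /\
    forall t, T1 < t ->
      derivable_pt_lim x t (- sumR m (fun i => p i t * x (tau i t))).

Definition oscillatory (x : R -> R) : Prop :=
  forall T, exists t, T <= t /\ x t = 0.

(* Main.v *)
Require Import Defs.
From Stdlib Require Import Reals Lra Lia Classical.
From Coquelicot Require Import Coquelicot.
Open Scope R_scope.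

Lemma sumR_le n f g : (forall i, (i < n)%nat -> f i <= g i) -> sumR n f <= sumR n g.
Proof. induction n; simpl; intros H. lra. pose proof (H n ltac:(lia)). assert (sumR n f <= sumR n g) by (apply IHn; intros; apply H; lia). lra. Qed.

Lemma sumR_scal n k f : sumR n (fun i => k * f i) = k * sumR n f.
Proof. induction n; simpl. ring. rewrite IHn; ring. Qed.

Lemma sumR_nonneg n f : (forall i, (i < n)%nat -> 0 <= f i) -> 0 <= sumR n f.
Proof. induction n; simpl; intros H. lra. pose proof (H n ltac:(lia)). assert (0 <= sumR n f) by (apply IHn; intros; apply H; lia). lra. Qed.

Lemma sumR_pos n f : (1 <= n)%nat -> (forall i, (i < n)%nat -> 0 < f i) -> 0 < sumR n f.
Proof. destruct n. lia. intros _ H; simpl. pose proof (H n ltac:(lia)). assert (0 <= sumR n f) by (apply sumR_nonneg; intros; left; apply H; lia). lra. Qed.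

Lemma prodR_le n f g : (forall i, (i < n)%nat -> 0 <= f i <= g i) -> 0 <= prodR n f <= prodR n g.
Proof. induction n; simpl; intros H. lra. pose proof (H n ltac:(lia)). assert (0 <= prodR n f <= prodR n g) by (apply IHn; intros; apply H; lia). split. apply Rmult_le_pos; lra. apply Rmult_le_compat; lra. Qed.

Lemma prodR_scal n k f : prodR n (fun i => k * f i) = k ^ n * prodR n f.
Proof. induction n; simpl. ring. rewrite IHn; ring. Qed.

Lemma bernoulli k h : -1 <= h -> 1 + INR k * h <= (1 + h) ^ k.
Proof. intros Hh. induction k. simpl. lra. rewrite S_INR. simpl.
  pose proof (pos_INR k). assert (0 <= INR k * (h*h)) by (apply Rmult_le_pos; nra).
  assert (0 <= (1+h) * ((1+h)^k - (1 + INR k * h))) by (apply Rmult_le_pos; lra). nra. Qed.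

Lemma amgm_step n u a : (1 <= n)%nat -> 0 <= u -> 0 <= a ->
  u ^ n * a <= ((INR n * u + a) / (INR n + 1)) ^ (S n).
Proof. intros Hn Hu Ha. assert (Hn0 : 0 < INR n) by (apply lt_0_INR; lia).
  destruct Hu as [Hu|Hu].
  - set (h := (a - u) / ((INR n + 1) * u)).
    assert (Hhd : h * ((INR n + 1) * u) = a - u) by (unfold h; field; lra).
    assert (HD : 0 < (INR n + 1) * u) by nra.
    assert (Hh : -1 <= h) by (destruct (Rle_or_lt (-1) h); [auto| nra]).
    assert (E : (INR n * u + a) / (INR n + 1) = u * (1 + h)) by (unfold h; field; lra).
    rewrite E, Rpow_mult_distr. pose proof (bernoulli (S n) h Hh) as B. rewrite S_INR in B.
    assert (Hpn : 0 < u ^ n) by (apply pow_lt; lra).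
    simpl (u ^ S n). assert (0 < u * u ^ n) by nra.
    assert (u * u ^ n * (1 + (INR n + 1) * h) <= u * u ^ n * (1 + h) ^ S n) by (apply Rmult_le_compat_l; lra).
    assert (u * u ^ n * (1 + (INR n + 1) * h) = u ^ n * a).
    { replace (u * u ^ n * (1 + (INR n + 1) * h)) with (u ^ n * (u + h * ((INR n + 1) * u))) by ring. rewrite Hhd. ring. } lra.
  - subst u. rewrite pow_i by lia. rewrite Rmult_0_l. apply pow_le.
    apply Rmult_le_pos. lra. left. apply Rinv_0_lt_compat. lra. Qed.

Lemma prodR_nonneg n f : (forall i, (i < n)%nat -> 0 <= f i) -> 0 <= prodR n f.
Proof. intros H. apply (prodR_le n f f). intros i Hi; split; [apply H; exact Hi | lra]. Qed.

Lemma amgm k f : (forall i, (i < S k)%nat -> 0 <= f i) ->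
  prodR (S k) f <= (sumR (S k) f / INR (S k)) ^ (S k).
Proof. induction k; intros H.
  - simpl. unfold Rdiv. rewrite Rinv_1. lra.
  - change (prodR (S (S k)) f) with (prodR (S k) f * f (S k)).
    change (sumR (S (S k)) f) with (sumR (S k) f + f (S k)).
    set (S0 := sumR (S k) f). set (a := f (S k)).
    assert (HIH : prodR (S k) f <= (S0 / INR (S k)) ^ S k) by (apply IHk; intros; apply H; lia).
    assert (Ha : 0 <= a) by (apply H; lia).
    assert (HP : 0 <= prodR (S k) f) by (apply prodR_nonneg; intros; apply H; lia).
    assert (HS : 0 <= S0) by (apply sumR_nonneg; intros; apply H; lia).
    assert (Hk : 0 < INR (S k)) by (apply lt_0_INR; lia).
    assert (Hu : 0 <= S0 / INR (S k)) by (apply Rdiv_le_0_compat; lra).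
    pose proof (amgm_step (S k) (S0 / INR (S k)) a ltac:(lia) Hu Ha) as St.
    replace (INR (S k) * (S0 / INR (S k))) with S0 in St by (field; lra).
    rewrite <- S_INR in St.
    assert (prodR (S k) f * a <= (S0 / INR (S k)) ^ S k * a) by (apply Rmult_le_compat_r; lra).
    lra. Qed.

Lemma der_cont f t l : derivable_pt_lim f t l -> continuity_pt f t.
Proof. intros H. apply continuity_pt_filterlim. apply (ex_derive_continuous f t).
  exists l. apply is_derive_Reals. exact H. Qed.

Lemma mono_dec (f df : R -> R) a b : a <= b ->
  (forall s, a <= s <= b -> derivable_pt_lim f s (df s)) ->
  (forall s, a <= s <= b -> df s <= 0) -> f b <= f a.
Proof. intros Hab Hd Hn.
  pose proof (MVT_gen f a b df) as HM. cbv zeta in HM.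
  rewrite Rmin_left, Rmax_right in HM by lra.
  destruct HM as [c [Hc E]].
  - intros s Hs. apply is_derive_Reals. apply Hd. lra.
  - intros s Hs. apply (der_cont f s (df s)). apply Hd. lra.
  - pose proof (Hn c Hc). nra. Qed.

Lemma cont_in_pt (f : R -> R) t0 s : cont_from f t0 -> t0 < s -> continuity_pt f s.
Proof. unfold cont_from, continuity_pt, continue_in, limit1_in, limit_in, D_x, no_cond.
  intros H Hs eps Heps. destruct (H s (Rlt_le _ _ Hs) eps Heps) as [alp [Ha Hx]].
  exists (Rmin alp (s - t0)). split. apply Rmin_pos; lra.
  intros z [[_ Hneq] Hd]. apply Hx. simpl in *. unfold R_dist in *.
  pose proof (Rmin_l alp (s - t0)). pose proof (Rmin_r alp (s - t0)).
  apply Rabs_def2 in Hd. split. split. lra. exact Hneq.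
  apply Rabs_def1; lra. Qed.

Lemma tau_large (f : nat -> R -> R) n :
  (forall i, (i < n)%nat -> forall M, exists T, forall t, T <= t -> M <= f i t) ->
  forall M, exists T, forall i t, (i < n)%nat -> T <= t -> M <= f i t.
Proof. induction n; intros H M.
  - exists 0. intros; lia.
  - destruct (IHn ltac:(intros; apply H; lia) M) as [T1 H1].
    destruct (H n ltac:(lia) M) as [T2 H2]. exists (Rmax T1 T2). intros i t Hi Ht.
    pose proof (Rmax_l T1 T2). pose proof (Rmax_r T1 T2).
    destruct (Nat.eq_dec i n). subst. apply H2; lra. apply H1; [lia|lra]. Qed.

Lemma key (y g q : R -> R) a t K : a <= t ->
  (forall s, a <= s <= t -> derivable_pt_lim y s (- g s)) ->
  (forall s, a <= s <= t -> K * q s <= g s) ->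
  (forall s, a - 1 < s -> s < t + 1 -> continuity_pt q s) ->
  y t + K * RInt q a t <= y a.
Proof. intros Hat Hd Hle Hc.
  assert (HR : forall s, a <= s <= t -> is_derive (fun s => RInt q a s) s (q s)).
  { intros s Hs. apply (is_derive_RInt q (RInt q a) a s).
    - exists (mkposreal (1/2) ltac:(lra)). intros b Hb.
      assert (Hb' : Rabs (b - s) < 1/2) by exact Hb. apply Rabs_def2 in Hb'.
      apply (@RInt_correct R_CompleteNormedModule). apply (@ex_RInt_continuous R_CompleteNormedModule). intros z Hz.
      apply continuity_pt_filterlim. unfold Rmin, Rmax in Hz.
      destruct (Rle_dec a b); apply Hc; lra.
    - apply continuity_pt_filterlim, Hc; lra. }
  pose proof (mono_dec (fun s => y s + K * RInt q a s) (fun s => - g s + K * q s) a t Hat) as M.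
  cbv beta in M. rewrite RInt_point in M. change (zero : R) with 0 in M.
  assert (y t + K * RInt q a t <= y a + K * 0); [|lra].
  apply M.
  - intros s Hs. apply is_derive_Reals.
    apply (is_derive_plus y (fun s => K * RInt q a s)).
    apply is_derive_Reals, Hd; lra. apply is_derive_scal, HR; lra.
  - intros s Hs. pose proof (Hle s Hs). lra. Qed.

Lemma main_pos (t0 : R) (m : nat) (p tau : nat -> R -> R) (q y : R -> R) (Ty : R) :
  (1 <= m)%nat ->
  (forall i t, (i < m)%nat -> t0 <= t -> 0 <= p i t) ->
  (forall i t, (i < m)%nat -> t0 <= t -> 0 <= tau i t <= t) ->
  (forall i, (i < m)%nat -> forall M, exists T, forall t, T <= t -> M <= tau i t) ->
  (forall i s t, (i < m)%nat -> t0 <= s -> s <= t -> tau i s <= tau i t) ->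
  cont_from q t0 ->
  (forall t, t0 <= t -> 0 <= q t) ->
  (forall i t, (i < m)%nat -> t0 <= t -> q t <= p i t) ->
  (exists c, c > / (INR m ^ m) /\
     forall T, exists t, T <= t /\
       exists I : nat -> R,
         (forall j, (j < m)%nat -> has_integral q (tau j t) t (I j)) /\
         prodR m I > c) ->
  t0 + 1 <= Ty ->
  (forall s, Ty <= s -> 0 < y s) ->
  (forall s, Ty <= s -> derivable_pt_lim y s (- sumR m (fun i => p i s * y (tau i s)))) ->
  False.
Proof.
  intros Hm Hp0 Htau Htinf Hmono Hqc Hq0 Hqp Hlim Hty Hypos Hyd.
  destruct (tau_large tau m Htinf Ty) as [Ta Ha].
  pose proof (Rmax_l Ta Ty). pose proof (Rmax_r Ta Ty). set (Tq := Rmax Ta Ty) in *.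
  assert (Hdec : forall u v, Tq <= u -> u <= v -> y v <= y u).
  { intros u v Hu Huv.
    apply (mono_dec y (fun s => - sumR m (fun i => p i s * y (tau i s))) u v Huv).
    - intros s Hs. apply Hyd. lra.
    - intros s Hs. assert (0 <= sumR m (fun i => p i s * y (tau i s))); [|lra].
      apply sumR_nonneg. intros i Hi. apply Rmult_le_pos.
      apply Hp0; [exact Hi| lra].
      left. apply Hypos. apply Ha; [exact Hi| lra]. }
  destruct (tau_large tau m Htinf Tq) as [Tb Hb].
  pose proof (Rmax_l Tb Tq). pose proof (Rmax_r Tb Tq). set (Tr := Rmax Tb Tq) in *.
  destruct (tau_large tau m Htinf Tr) as [Tc Hc].
  pose proof (Rmax_l Tc Tr). pose proof (Rmax_r Tc Tr). set (Ts := Rmax Tc Tr) in *.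

  destruct Hlim as [c [Hc1 Hc2]]. destruct (Hc2 Ts) as [t [Ht [I [HI HpI]]]].
  set (K := sumR m (fun i => y (tau i t))).
  assert (HK : 0 < K).
  { apply sumR_pos; [exact Hm|]. intros i Hi. apply Hypos.
    assert (Tq <= tau i t) by (apply Hb; [exact Hi | lra]). lra. }
  assert (Hj : forall j, (j < m)%nat -> 0 <= K * I j <= y (tau j t)).
  { intros j Hj.
    assert (Ha1 : Tr <= tau j t) by (apply Hc; [exact Hj | lra]).
    assert (Ha2 : tau j t <= t) by (apply Htau; [exact Hj | lra]).
    destruct (HI j Hj) as [pr Hpr]. rewrite <- Hpr, <- RInt_Reals.
    split.
    - apply Rmult_le_pos; [lra|]. apply RInt_ge_0; [exact Ha2| |].
      apply ex_RInt_Reals_1; exact pr.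
      intros z Hz. apply Hq0. lra.
    - pose proof (key y (fun s => sumR m (fun i => p i s * y (tau i s))) q (tau j t) t K Ha2) as Kk.
      assert (0 < y t) by (apply Hypos; lra).
      assert (y t + K * RInt q (tau j t) t <= y (tau j t)); [|lra].
      apply Kk.
      + intros s Hs. apply Hyd. lra.
      + intros s Hs. unfold K. rewrite Rmult_comm, <- sumR_scal.
        apply sumR_le. intros i Hi.
        assert (0 <= q s) by (apply Hq0; lra).
        assert (q s <= p i s) by (apply Hqp; [exact Hi | lra]).
        assert (Tq <= tau i s) by (apply Hb; [exact Hi | lra]).
        assert (tau i s <= tau i t) by (apply Hmono; [exact Hi | lra | lra]).
        assert (0 < y (tau i t)) by (apply Hypos; lra).
        assert (y (tau i t) <= y (tau i s)) by (apply Hdec; lra).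
        nra.
      + intros s Hs1 Hs2. apply (cont_in_pt q t0 s Hqc). lra. }
  pose proof (prodR_le m (fun j => K * I j) (fun j => y (tau j t)) Hj) as [_ HP].
  rewrite prodR_scal in HP.
  destruct m as [|k]; [lia|].
  pose proof (amgm k (fun j => y (tau j t))) as AM.
  fold K in AM.
  assert (prodR (S k) (fun j => y (tau j t)) <= (K / INR (S k)) ^ S k) as AM'.
  { apply AM. intros i Hi. left. apply Hypos.
    assert (Tq <= tau i t) by (apply Hb; [exact Hi | lra]). lra. }
  unfold Rdiv in AM'. rewrite Rpow_mult_distr, pow_inv in AM'.
  assert (HKm : 0 < K ^ S k) by (apply pow_lt; lra).
  assert (prodR (S k) I <= / INR (S k) ^ S k).
  { apply (Rmult_le_reg_l (K ^ S k)); [exact HKm|]. lra. }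
  lra.
Qed.

Lemma sumR_ext n f g : (forall i, (i < n)%nat -> f i = g i) -> sumR n f = sumR n g.
Proof. induction n; simpl; intros H. reflexivity. rewrite IHn by (intros; apply H; lia). rewrite H by lia. reflexivity. Qed.

Theorem corollary3p4 (t0 : R) (m : nat) (p tau : nat -> R -> R) (q : R -> R) :
  (1 <= m)%nat ->
  (forall i, (i < m)%nat -> cont_from (p i) t0) ->
  (forall i, (i < m)%nat -> cont_from (tau i) t0) ->
  (forall i t, (i < m)%nat -> t0 <= t -> 0 <= p i t) ->
  (forall i t, (i < m)%nat -> t0 <= t -> 0 <= tau i t <= t) ->
  (forall i, (i < m)%nat -> forall M, exists T, forall t, T <= t -> M <= tau i t) ->
  (forall i s t, (i < m)%nat -> t0 <= s -> s <= t -> tau i s <= tau i t) ->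
  cont_from q t0 ->
  (forall t, t0 <= t -> 0 <= q t) ->
  (forall i t, (i < m)%nat -> t0 <= t -> q t <= p i t) ->
  (* limsup_{t->oo} prod_j int_{tau_j(t)}^t q(s) ds > 1/m^m *)
  (exists c, c > / (INR m ^ m) /\
     forall T, exists t, T <= t /\
       exists I : nat -> R,
         (forall j, (j < m)%nat -> has_integral q (tau j t) t (I j)) /\
         prodR m I > c) ->
  forall (x : R -> R) (T0 : R), is_solution t0 m p tau x T0 -> oscillatory x.
Proof.
  intros Hm Hpc Htc Hp0 Htau Htinf Hmono Hqc Hq0 Hqp Hlim x T0 [Ht0 [_ [T1 [_ Hder]]]] T.
  destruct (classic (exists t, T <= t /\ x t = 0)) as [H|H]; [exact H|exfalso].
  pose proof (Rmax_l (Rmax T (T1+1)) (t0+1)). pose proof (Rmax_r (Rmax T (T1+1)) (t0+1)).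
  pose proof (Rmax_l T (T1+1)). pose proof (Rmax_r T (T1+1)).
  set (Ty := Rmax (Rmax T (T1+1)) (t0+1)) in *.
  assert (Hnz : forall s, Ty <= s -> x s <> 0).
  { intros s Hs E. apply H. exists s. split; [lra|exact E]. }
  set (sg := if Rlt_dec 0 (x Ty) then 1 else -1).
  set (y := fun s => sg * x s).
  assert (Hyd : forall s, Ty <= s ->
            derivable_pt_lim y s (- sumR m (fun i => p i s * y (tau i s)))).
  { intros s Hs. apply is_derive_Reals.
    replace (- sumR m (fun i => p i s * y (tau i s)))
      with (sg * (- sumR m (fun i => p i s * x (tau i s)))).
    - apply is_derive_scal. apply is_derive_Reals. apply Hder. lra.
    - rewrite (sumR_ext m (fun i => p i s * y (tau i s)) (fun i => sg * (p i s * x (tau i s)))).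
      rewrite sumR_scal. ring. intros i _. unfold y. ring. }
  assert (Hy0 : 0 < y Ty).
  { unfold y, sg. pose proof (Hnz Ty (Rle_refl _)).
    destruct (Rlt_dec 0 (x Ty)); [lra|]. lra. }
  assert (Hsg : sg <> 0) by (unfold sg; destruct (Rlt_dec 0 (x Ty)); lra).
  assert (Hypos : forall s, Ty <= s -> 0 < y s).
  { intros s Hs. destruct (Rlt_or_le 0 (y s)) as [Hp|Hn]; [exact Hp|exfalso].
    assert (Hne : y s <> 0).
    { unfold y. intros E. apply Rmult_integral in E. destruct E as [E|E]; [lra|].
      apply (Hnz s Hs E). }
    assert (Hlt : Ty < s).
    { destruct Hs as [Hs|Hs]; [exact Hs|]. subst s. lra. }
    destruct (Ranalysis5.IVT_interv (fun u => - y u) Ty s) as [z [Hz Ez]].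
    - intros a Ha. apply (der_cont (fun u => - y u) a (- (- sumR m (fun i => p i a * y (tau i a))))).
      apply derivable_pt_lim_opp. apply Hyd. lra.
    - exact Hlt.
    - lra.
    - lra.
    - apply (Hnz z). lra. unfold y in Ez. cbv beta in Ez.
      assert (sg * x z = 0) by lra. apply Rmult_integral in H4. destruct H4; [lra|auto]. }
  apply (main_pos t0 m p tau q y Ty); auto.
Qed.
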